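(* Let $C\in M_n(\mathbb{C})$ be a contraction, $D=I-C^*C$, $d=\operatorname{rank}D$, and let $T_j$ be its partial isometry tower. Define polynomials $\phi_{-1}=0$, $\phi_0=1$, $\phi_{m+1}(z,r)=z\phi_m(z,r)-r^2\phi_{m-1}(z,r)$. Then for every $j\ge1$, every $\theta\in\mathbb{R}$ and all $z,r\in\mathbb{C}$ with $\phi_j(z,r)\ne0$, $$\det\bigl(zI-2rH_{T_j}(\theta)\bigr)=\phi_j(z,r)^d\det\!\Bigl(zI-2rH_C(\theta)-r^2\frac{\phi_{j-1}(z,r)}{\phi_j(z,r)}D\Bigr),$$ where $2rH_X(\theta)$ means $re^{-i\theta}X+re^{i\theta}X^*$. Equivalently, writing $z=2ru$ with $r\neq 0$ and $U_k$ for the Chebyshev polynomials of the second kind, $$\det\bigl(zI-2rH_{T_j}(\theta)\bigr)=(2r)^n r^{jd}U_j(u)^d\det\bigl(uI-H_C(\theta)-\tau_j(u)D\bigr),\qquad \tau_j(u)=\frac{U_{j-1}(u)}{2U_j(u)}.$$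
   Context: For $X\in M_n(\mathbb{C})$ and $\theta\in\mathbb{R}$, $H_X(\theta):=\operatorname{Re}(e^{-i\theta}X)=\frac12(e^{-i\theta}X+e^{i\theta}X^* )$. A contraction is a matrix with $\|C\|\le 1$. For a contraction $C$, $D_C=I-C^*C$, $d=\operatorname{rank}D_C$, $B_C$ is a $d\times n$ matrix of full row rank with $B_C^*B_C=D_C$ (the matrix of $D_C^{1/2}$ restricted to $\operatorname{Im}D_C$, zero on its orthogonal complement), $\mathcal{A}(C)=\begin{bmatrix}0&B_C\\0&C\end{bmatrix}$, and the partial isometry tower is $T_0=C$, $T_{j+1}=\mathcal{A}(T_j)$. Chebyshev polynomials of the second kind: $U_{-1}=0$, $U_0=1$, $U_{k+1}(u)=2uU_k(u)-U_{k-1}(u)$. *)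

(* Defs.v *)
From HB Require Import structures.
From mathcomp Require Import all_boot all_order all_algebra.
From mathcomp.real_closed Require Import complex.
From mathcomp Require Import classical_sets reals trigo.
Set Implicit Arguments. Unset Strict Implicit. Unset Printing Implicit Defensive.
Import Order.TTheory GRing.Theory Num.Theory.
Local Open Scope ring_scope.
Local Open Scope complex_scope.

Section Defs.
Variable R : realType.
Local Notation C := R[i].

Definition ctrans m n (X : 'M[C]_(m, n)) : 'M[C]_(n, m) := map_mx conjc X^T.

Definition sqnorm n (x : 'cV[C]_n) : C := \sum_(i < n) `|x i 0| ^+ 2.

Definition contraction n (X : 'M[C]_n) : Prop :=
  forall x : 'cV[C]_n, sqnorm (X *m x) <= sqnorm x.

Definition defect n (X : 'M[C]_n) : 'M[C]_n := 1%:M - ctrans X *m X.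

Definition defect_factor n (X : 'M[C]_n) (B : 'M[C]_(\rank (defect X), n)) : Prop :=
  row_free B /\ ctrans B *m B = defect X.

Definition Bmx n (X : 'M[C]_n) : 'M[C]_(\rank (defect X), n) :=
  xget 0 [set B | @defect_factor n X B].

Record sqmx := SqMx { sz : nat; mx : 'M[C]_sz }.

Definition Aop (X : sqmx) : sqmx :=
  @SqMx (\rank (defect (mx X)) + sz X) (block_mx 0 (Bmx (mx X)) 0 (mx X)).

Definition tower n (X : 'M[C]_n) (j : nat) : sqmx := iter j Aop (SqMx X).

Definition expi (t : R) : C := (cos t) +i* (sin t).

Definition Hpart n (X : 'M[C]_n) (t : R) : 'M[C]_n :=
  2^-1 *: (expi (- t) *: X + expi t *: ctrans X).

(* phi_{-1} = 0, phi_0 = 1, phi_{m+1} = z phi_m - r^2 phi_{m-1};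
   phipair m = (phi_{m-1}, phi_m) *)
Fixpoint phipair (z r : C) (m : nat) : C * C :=
  match m with
  | 0 => (0, 1)
  | m'.+1 => let p := phipair z r m' in (p.2, z * p.2 - r ^+ 2 * p.1)
  end.
Definition phi (z r : C) (m : nat) : C := (phipair z r m).2.

(* Chebyshev polynomials of the second kind: U_{-1}=0, U_0=1,
   U_{k+1} = 2u U_k - U_{k-1};  Upair k = (U_{k-1}, U_k) *)
Fixpoint Upair (u : C) (k : nat) : C * C :=
  match k with
  | 0 => (0, 1)
  | k'.+1 => let p := Upair u k' in (p.2, 2 * u * p.2 - p.1)
  end.
Definition chebU (u : C) (k : nat) : C := (Upair u k).2.

Definition tau (u : C) (j : nat) : C := chebU u j.-1 / (2 * chebU u j).

End Defs.

(* Main.v *)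
Require Import Defs.
From HB Require Import structures.
From mathcomp Require Import all_boot all_order all_algebra.
From mathcomp.real_closed Require Import complex.
From mathcomp Require Import classical_sets reals trigo.
From mathcomp Require Import spectral sesquilinear ring zify.
Import Order.TTheory GRing.Theory Num.Theory.
Local Open Scope ring_scope.

Section Part1.
Local Open Scope sesquilinear_scope.
Variable R : realType.
Local Notation C := R[i].

Lemma ctransE m n (A : 'M[C]_(m, n)) : ctrans A = A ^t*.
Proof. by []. Qed.

Lemma ctransK m n (A : 'M[C]_(m, n)) : ctrans (ctrans A) = A.
Proof. exact: trmxCK. Qed.

Lemma ctransM m n p (A : 'M[C]_(m, n)) (B : 'M[C]_(n, p)) :
  ctrans (A *m B) = ctrans B *m ctrans A.
Proof. by rewrite !ctransE trmx_mul map_mxM. Qed.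

Lemma ctransB m n (A B : 'M[C]_(m, n)) : ctrans (A - B) = ctrans A - ctrans B.
Proof. by rewrite !ctransE linearB /= map_mxB. Qed.

Lemma ctrans1 m : ctrans (1%:M : 'M[C]_m) = 1%:M.
Proof. by rewrite ctransE trmx1 map_mx1. Qed.

Lemma ctrans0 m n : ctrans (0 : 'M[C]_(m, n)) = 0.
Proof. by rewrite ctransE trmx0 map_mx0. Qed.

Lemma ctrans_block m1 m2 n1 n2 (A : 'M[C]_(m1, n1)) (B : 'M[C]_(m1, n2))
  (Cc : 'M[C]_(m2, n1)) (D : 'M[C]_(m2, n2)) :
  ctrans (block_mx A B Cc D) = block_mx (ctrans A) (ctrans Cc) (ctrans B) (ctrans D).
Proof. by rewrite ctransE tr_block_mx map_block_mx. Qed.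

Lemma ctrans_row m n1 n2 (A : 'M[C]_(m, n1)) (B : 'M[C]_(m, n2)) :
  ctrans (row_mx A B) = col_mx (ctrans A) (ctrans B).
Proof. by rewrite ctransE tr_row_mx map_col_mx. Qed.

Lemma ctransZ m n (a : C) (A : 'M[C]_(m, n)) : ctrans (a *: A) = a^* *: ctrans A.
Proof. by rewrite ctransE linearZ /= map_mxZ. Qed.

Lemma ctransij m n (A : 'M[C]_(m, n)) i j : ctrans A i j = conjc (A j i).
Proof. by rewrite !mxE. Qed.

Lemma gram0 m n (A : 'M[C]_(m, n)) : A *m ctrans A = 0 -> A = 0.
Proof.
move=> H; apply/matrixP => i j; rewrite mxE.
have /matrixP /(_ i i) := H; rewrite !mxE => /eqP.
rewrite psumr_eq0; last by move=> k _; rewrite !mxE mul_conjC_ge0.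
move=> /allP /(_ j (mem_index_enum _)) /=; rewrite !mxE mul_conjC_eq0.
by move/eqP.
Qed.

Lemma rank_factor k n (B : 'M[C]_(k, n)) : row_free B -> \rank (ctrans B *m B) = k.
Proof.
move=> rf; apply/eqP; rewrite eqn_leq; apply/andP; split.
  exact: leq_trans (mxrankM_maxr _ _) (rank_leq_row _).
set M := ctrans B *m B.
have HK : kermx M *m ctrans B = 0.
  apply: gram0; rewrite ctransM ctransK mulmxA -(mulmxA (kermx M)).
  by rewrite mulmx_ker mul0mx.
have sub : (kermx M <= kermx (ctrans B))%MS by apply/sub_kermxP.
have := mxrankS sub; rewrite !mxrank_ker ctransE mxrank_map mxrank_tr.
have rk : \rank B = k by apply/eqP.
rewrite rk.
have : (\rank M <= n)%N by apply: rank_leq_col.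
have : (k <= n)%N by rewrite -rk rank_leq_col.
lia.
Qed.

Lemma exists_factor_gen m (D : 'M[C]_m) k (B : 'M[C]_(k, m)) :
  row_free B -> ctrans B *m B = D ->
  exists B0 : 'M[C]_(\rank D, m), row_free B0 /\ ctrans B0 *m B0 = D.
Proof.
move=> rf eD; have e : k = \rank D by rewrite -eD rank_factor.
move: e; move: (\rank D) => kk e; case: kk / e.
by exists B.
Qed.

Lemma Bmx_spec m (Y : 'M[C]_m) k (B : 'M[C]_(k, m)) :
  row_free B -> ctrans B *m B = defect Y -> @defect_factor R m Y (Bmx Y).
Proof.
move=> rf eD; rewrite /Bmx.
apply: (@xgetPex _ 0 [set B | @defect_factor R m Y B]).
exact: exists_factor_gen rf eD.
Qed.

Lemma defect_block d m (Y : 'M[C]_m) (B : 'M[C]_(d, m)) :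
  ctrans B *m B = defect Y ->
  defect (block_mx 0 B 0 Y) = block_mx 1%:M 0 0 0.
Proof.
move=> eB; rewrite /defect ctrans_block !ctrans0 mulmx_block.
rewrite !mul0mx !mulmx0 !addr0 ?add0r eB /defect.
rewrite (scalar_mx_block d m 1) opp_block_mx add_block_mx !oppr0 !addr0.
by rewrite subrK subrr.
Qed.

Lemma factor_block d m :
  let B := row_mx (1%:M : 'M[C]_d) (0 : 'M[C]_(d, m)) in
  row_free B /\ ctrans B *m B = block_mx 1%:M 0 0 0.
Proof.
move=> B; rewrite /B.
rewrite ctrans_row ctrans1 ctrans0 mul_col_row !mul1mx !mul0mx; split => //.
rewrite /row_free eqn_leq rank_leq_row /=.
have E : row_mx (1%:M : 'M[C]_d) (0 : 'M[C]_(d, m)) *m col_mx 1%:M 0 = 1%:M.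
  by rewrite mul_row_col mul1mx mul0mx addr0.
by have := mxrankM_maxl (row_mx (1%:M : 'M[C]_d) (0 : 'M[C]_(d, m))) (col_mx (1%:M : 'M[C]_d) (0 : 'M[C]_(m, d))); rewrite E mxrank1.
Qed.


Lemma sqnormE n (x : 'cV[C]_n) : sqnorm x = (ctrans x *m x) 0 0.
Proof.
rewrite /sqnorm !mxE; apply: eq_bigr => i _.
by rewrite normCKC !mxE.
Qed.

Lemma ctrans_defect n (X : 'M[C]_n) : ctrans (defect X) = defect X.
Proof. by rewrite /defect ctransB ctrans1 ctransM ctransK. Qed.

Lemma defect_form n (X : 'M[C]_n) (x : 'cV[C]_n) :
  (ctrans x *m defect X *m x) 0 0 = sqnorm x - sqnorm (X *m x).
Proof.
rewrite !sqnormE /defect mulmxBr mulmx1 mulmxBl ctransM !mulmxA.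
by rewrite [LHS]mxE [X in _ + X]mxE.
Qed.

Lemma contraction_factor n (X : 'M[C]_n) : contraction X ->
  exists k (B : 'M[C]_(k, n)), row_free B /\ ctrans B *m B = defect X.
Proof.
move=> cX; set D := defect X.
have Dh : ctrans D = D by exact: ctrans_defect.
have Dn : D \is normalmx by apply/normalmxP; rewrite -ctransE Dh.
set P := spectralmx D; set l := spectral_diag D.
have eD : D = invmx P *m diag_mx l *m P by apply/orthomx_spectralP.
have Pu : P \is unitarymx by apply: spectral_unitarymx.
have PP : P *m ctrans P = 1%:M by apply/unitarymxP.
have iP : invmx P = ctrans P by apply: invmx_unitary.
rewrite iP in eD.
have lge0 : forall i, 0 <= l 0 i.
  move=> i; set x := ctrans (row i P).
  have := cX x; rewrite -subr_ge0 -defect_form -/D.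
  suff -> : (ctrans x *m D *m x) 0 0 = l 0 i by [].
  have -> : l 0 i = (P *m D *m ctrans P) i i.
    rewrite eD !mulmxA PP mul1mx -!mulmxA PP mulmx1 mxE eqxx mulr1n //.
  rewrite /x ctransK !mxE; apply: eq_bigr => j _; rewrite !mxE.
  by congr (_ * _); apply: eq_bigr => k _; rewrite !mxE.
pose S := [set i | l 0 i != 0].
pose k := #|S|.
pose f := fun j : 'I_k => @enum_val _ (mem S) j.
pose s := fun j : 'I_k => sqrtC (l 0 (f j)).
have sc : forall j, conjc (s j) = s j by move=> j; apply: geC0_conj; rewrite sqrtC_ge0.
have ss : forall j, s j * s j = l 0 (f j) by move=> j; rewrite -expr2 sqrtCK.
have cM : forall x y : C, conjc (x * y) = conjc x * conjc y by move=> x y; rewrite rmorphM.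
pose B := \matrix_(j < k, b < n) (s j * P (f j) b).
exists k, B; split; last first.
  apply/matrixP => a b; rewrite eD mul_mx_diag [LHS]mxE [RHS]mxE.
  rewrite (eq_bigr (fun j => (l 0 (f j)) * (conjc (P (f j) a) * P (f j) b))); last first.
    move=> j _; rewrite !mxE cM sc.
    by rewrite mulrACA ss.
  rewrite -(big_enum_val (fun i => l 0 i * (conjc (P i a) * P i b))) /=.
  rewrite [RHS](bigID (mem S)) /= [X in _ = _ + X]big1 ?addr0; last first.
    move=> i; rewrite inE negbK => /eqP li0.
    by rewrite !mxE li0 mulr0 mul0r.
  apply: eq_bigr => i _; rewrite !mxE.
  by rewrite mulrCA mulrA.
have BB : B *m ctrans B = diag_mx (\row_j l 0 (f j)).
  apply/matrixP => a b; rewrite !mxE.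
  rewrite (eq_bigr (fun c => s a * conjc (s b) * (P (f a) c * conjc (P (f b) c)))); last first.
    by move=> c _; rewrite !mxE cM mulrACA.
  rewrite -mulr_sumr.
  have E : \sum_(c < n) P (f a) c * conjc (P (f b) c) = (f a == f b)%:R.
    have := congr1 (fun M : 'M[C]_n => M (f a) (f b)) PP; rewrite /= !mxE => <-.
    by apply: eq_bigr => c _; rewrite ctransij.
  rewrite E.
  rewrite (inj_eq enum_val_inj) sc.
  case: eqP => [->|_]; last by rewrite !mulr0n mulr0.
  by rewrite !mulr1n mulr1 ss.
have Bu : B *m ctrans B \in unitmx.
  rewrite BB unitmxE det_diag unitfE; apply/prodf_neq0 => j _.
  rewrite mxE; have := enum_valP (A := mem S) j.
  by rewrite inE.
rewrite /row_free eqn_leq rank_leq_row /=.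
by have := mxrankM_maxl B (ctrans B); rewrite mxrank_unit.
Qed.


Lemma tower_succ n (X : 'M[C]_n) j :
  tower X j.+1 = Aop (tower X j).
Proof. by []. Qed.

Lemma tower_facts n (X : 'M[C]_n) : contraction X -> forall j,
  @defect_factor R _ (mx (tower X j)) (Bmx (mx (tower X j))) /\
  \rank (defect (mx (tower X j))) = \rank (defect X).
Proof.
move=> cX; elim=> [|j [[_ fB] rk]].
  have [k [B [rf eB]]] := @contraction_factor _ X cX.
  by split => //; apply: Bmx_spec rf eB.
set T := tower X j in fB rk *.
have eD : defect (mx (Aop T)) = block_mx 1%:M 0 0 0 by apply: defect_block.
have [rf eB] := factor_block (\rank (defect (mx T))) (sz T).
rewrite tower_succ; split.
  by apply: (@Bmx_spec _ _ _ _ rf); rewrite eB eD.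
by rewrite eD -eB rank_factor.
Qed.

End Part1.

Lemma schur_step (K : comRingType) d m (p : K) (U : 'M[K]_(d, m)) (V : 'M[K]_(m, d)) (N : 'M[K]_m) :
  \det (block_mx (p%:M : 'M_d) U V N) * p ^+ m = p ^+ d * \det (p *: N - V *m U).
Proof.
have E : block_mx (p%:M : 'M_d) U V N *m block_mx 1%:M (-U) 0 (p%:M : 'M_m)
       = block_mx p%:M 0 V (p *: N - V *m U).
  rewrite mulmx_block !mulmx1 !mulmx0 !addr0 !mulmxN !mul_scalar_mx !mul_mx_scalar addNr.
  by rewrite addrC.
have := congr1 determinant E.
by rewrite det_mulmx det_ublock det_lblock !det_scalar expr1n mul1r => ->.
Qed.

Fixpoint pp (K : nzRingType) (z r : K) (m : nat) : K * K :=
  match m with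
  | 0 => (0, 1)
  | m'.+1 => let p := pp K z r m' in (p.2, z * p.2 - r ^+ 2 * p.1)
  end.

Arguments pp {K}.

Section Part2.
Variable R : realType.
Local Notation C := R[i].
Local Notation PC := {poly C}.

Definition Aof m (Y : 'M[C]_m) (a b : C) : 'M[C]_m := a *: Y + b *: ctrans Y.

Arguments Aof {m}.

Variables (a b r : C).
Hypothesis abr : a * b = r ^+ 2.

Definition phP k : PC := (pp 'X r%:P k).2.
Definition psP k : PC := (pp 'X r%:P k).1.

Definition Qf m (Y E : 'M[C]_m) k : PC :=
  \det (phP k *: ('X%:M - map_mx polyC (Aof Y a b)) - (r%:P ^+ 2 * psP k) *: map_mx polyC E).

Arguments Qf {m}.

Lemma phP_S k : phP k.+1 = 'X * phP k - r%:P ^+ 2 * psP k.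
Proof. by []. Qed.
Lemma psP_S k : psP k.+1 = phP k.
Proof. by []. Qed.


Lemma Qf_step d m (Y E : 'M[C]_m) (B : 'M[C]_(d, m)) k :
  ctrans B *m B = E ->
  Qf (block_mx 0 B 0 Y) (block_mx 1%:M 0 0 0) k * phP k.+1 ^+ m
  = phP k.+1 ^+ d * phP k ^+ m * Qf Y E k.+1.
Proof.
move=> eB; rewrite /Qf.
have eA : Aof (block_mx 0 B 0 Y) a b = block_mx 0 (a *: B) (b *: ctrans B) (Aof Y a b).
  by rewrite /Aof ctrans_block ctrans0 !scale_block_mx add_block_mx !scaler0 ?ctrans0 ?scaler0 !addr0 ?add0r.
rewrite eA !map_block_mx !map_mx0 map_scalar_mx /= (scalar_mx_block d m 'X).
rewrite opp_block_mx add_block_mx !scale_block_mx opp_block_mx add_block_mx.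
rewrite !scaler0 !subr0 !sub0r.
have -> : phP k *: ('X%:M : 'M_d) - (r%:P ^+ 2 * psP k) *: (1%:P)%:M = (phP k.+1)%:M.
  apply/matrixP => i j; rewrite !mxE phP_S polyC1.
  by case: eqP => _; rewrite ?mulr1n ?mulr0n; ring.
rewrite schur_step -mulrA; congr (_ * _).
rewrite -!scalemxAl -!scalemxAr mulNmx mulmxN opprK -map_mxM -scalemxAl -scalemxAr eB.
rewrite scalerA map_mxZ /= -scalerA psP_S map_mxZ /= !scalerA -detZ.
congr (\det _); rewrite [RHS]scalerBr !scalerA; congr (_ - _).
  by rewrite mulrC.
congr (_ *: _); rewrite -mulrA -polyCM [b * a]mulrC abr rmorphXn /=; ring.
Qed.


Lemma phP_size k : size (phP k) = k.+1 /\ (size (psP k) <= k)%N.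
Proof.
elim: k => [|k [IH1 IH2]].
  by rewrite /phP /psP /= size_poly1 size_poly0.
rewrite psP_S IH1; split => //.
have nz : phP k != 0 by rewrite -size_poly_eq0 IH1.
have sX : size ('X * phP k) = k.+2 by rewrite mulrC size_mulX // IH1.
rewrite phP_S size_addl sX //.
rewrite size_opp -rmorphXn /= mul_polyC.
apply: (leq_ltn_trans (size_scale_leq _ _)); exact: (leq_trans IH2).
Qed.

Lemma phP_neq0 k : phP k != 0.
Proof. by rewrite -size_poly_eq0 (proj1 (phP_size k)). Qed.


Definition Qt n (X : 'M[C]_n) j k :=
  Qf (mx (tower X j)) (defect (mx (tower X j))) k.

Arguments Qt {n}.

Lemma tower_poly n (X : 'M[C]_n) : contraction X -> forall j k,
  Qt X j k * phP (k + j) ^+ n * phP k ^+ \rank (defect X)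
  = phP k ^+ sz (tower X j) * phP (k + j) ^+ \rank (defect X) * Qt X 0 (k + j).
Proof.
move=> cX; elim=> [|j IH] k.
  rewrite addn0; change (sz (tower X 0)) with n.
  set q := Qt X 0 k; set u := phP k ^+ n; set v := phP k ^+ _.
  by rewrite [RHS]mulrC mulrA.
have [[_ fB] rk] := @tower_facts _ _ X cX j.
have step := @Qf_step _ _ (mx (tower X j)) _ _ k fB.
have IHk := IH k.+1.
rewrite addnS -addSn.
have eQ : Qt X j.+1 k = Qf (block_mx 0 (Bmx (mx (tower X j))) 0 (mx (tower X j)))
                          (block_mx 1%:M 0 0 0) k.
  by rewrite -(@defect_block _ _ _ _ _ fB).
rewrite eQ; change (sz (tower X j.+1)) with (\rank (defect (mx (tower X j))) + sz (tower X j))%N.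
have ed : phP k.+1 ^+ \rank (defect (mx (tower X j))) = phP k.+1 ^+ \rank (defect X).
  by rewrite rk.
have ed2 : phP k ^+ (\rank (defect (mx (tower X j))) + sz (tower X j))
         = phP k ^+ \rank (defect X) * phP k ^+ sz (tower X j).
  by rewrite rk exprD.
rewrite ed in step; rewrite ed2.
change (Qf (mx (tower X j)) (defect (mx (tower X j))) k.+1) with (Qt X j k.+1) in step.
move: step IHk.
set q1 := Qf _ _ k; set q2 := Qt X j k.+1; set q3 := Qt X 0 _.
set s := sz _; set d := \rank _.
set u := phP k.+1 ^+ s; set v := phP k.+1 ^+ d; set w := phP _ ^+ n.
set y := phP (k.+1 + j) ^+ d; set p := phP k ^+ d; set ps := phP k ^+ s.
move=> step IHk.
have nz : u * v != 0 by rewrite mulf_neq0 // expf_neq0 // phP_neq0.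
apply: (mulIf nz).
transitivity ((q1 * u) * (w * p * v)); first by ring.
rewrite step.
transitivity (ps * p * v * (q2 * w * v)); first by ring.
rewrite IHk; ring.
Qed.

End Part2.

Section Part3.
Variable R : realType.
Local Notation C := R[i].

Lemma expiNK (t : R) : expi (- t) * expi t = 1 :> C.
Proof.
rewrite /expi cosN sinN; simpc.
by rewrite -!expr2 cos2Dsin2 [sin t * _]mulrC subrr.
Qed.

Lemma HpartE m (Y : 'M[C]_m) t (r : C) :
  (2 * r) *: Hpart Y t = @Aof R m Y (r * expi (- t)) (r * expi t).
Proof.
rewrite /Hpart /Aof scalerA mulrAC divff ?mul1r ?pnatr_eq0 //.
by rewrite scalerDr !scalerA.
Qed.

Lemma phP_eval (r z : C) k :
  (phP R r k).[z] = (phipair z r k).2 /\ (psP R r k).[z] = (phipair z r k).1.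
Proof.
elim: k => [|k [IH1 IH2]].
  by rewrite /phP /psP /= hornerC hornerC.
rewrite psP_S phP_S IH1; split => //.
by rewrite hornerD hornerN !hornerM hornerX hornerC IH1 IH2 /= expr2.
Qed.


Lemma map_eval m (M E : 'M[C]_m) (p q : {poly C}) (z : C) :
  map_mx (horner_eval z) (p *: ('X%:M - map_mx polyC M) - q *: map_mx polyC E)
  = p.[z] *: (z%:M - M) - q.[z] *: E.
Proof.
apply/matrixP => i j; rewrite !mxE /horner_eval.
case: eqP => _; rewrite ?mulr1n ?mulr0n;
by rewrite !(hornerD, hornerN, hornerM, hornerX, hornerC, horner0).
Qed.

Lemma eval_identity n (X : 'M[C]_n) (a b r z : C) : a * b = r ^+ 2 ->
  contraction X -> forall j,
  \det (z%:M - @Aof R _ (mx (tower X j)) a b) * (phipair z r j).2 ^+ n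
  = (phipair z r j).2 ^+ \rank (defect X) *
    \det ((phipair z r j).2 *: (z%:M - @Aof R _ X a b) - (r ^+ 2 * (phipair z r j).1) *: defect X).
Proof.
move=> abr cX j.
have H := congr1 (horner_eval z) (@tower_poly R a b r abr n X cX j 0).
rewrite !add0n !rmorphM !rmorphXn /= in H.
rewrite /Qt /Qf -!det_map_mx !map_eval in H.
have [e1 e2] := phP_eval r z j; have [e3 e4] := phP_eval r z 0.
rewrite /horner_eval in H.
rewrite !hornerM !hornerC e1 e2 mulr0 scale0r subr0 scale1r !expr1n mulr1 mul1r -expr2 in H.
exact: H.
Qed.

End Part3.

Lemma phipair_cheb (R : realType) (r u : R[i]) k :
  (phipair (2 * r * u) r k).2 = r ^+ k * (Upair u k).2 /\
  r * (phipair (2 * r * u) r k).1 = r ^+ k * (Upair u k).1.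
Proof.
elim: k => [|k [IH1 IH2]]; first by rewrite /= ?mulr0 ?mulr1 ?expr0 ?mul1r.
set p := phipair (2 * r * u) r k; set q := Upair u k.
have e1 : (phipair (2 * r * u) r k.+1).1 = p.2 by [].
have e2 : (Upair u k.+1).1 = q.2 by [].
have e3 : (phipair (2 * r * u) r k.+1).2 = 2 * r * u * p.2 - r ^+ 2 * p.1 by [].
have e4 : (Upair u k.+1).2 = 2 * u * q.2 - q.1 by [].
rewrite e1 e2 e3 e4 IH1 -/q [r ^+ k.+1]exprS; split; last by rewrite mulrA.
have -> : r ^+ 2 * p.1 = r * (r * p.1) by rewrite expr2 mulrA.
rewrite IH2 -/q; ring.
Qed.

Theorem mainTheorem3 (R : realType) (n : nat) (X : 'M[R[i]]_n) :
  contraction X ->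
  let D := defect X in
  let d := \rank D in
  forall j : nat, (1 <= j)%N ->
  (forall (t : R) (z r : R[i]), phi z r j != 0 ->
     \det (z%:M - (2 * r) *: Hpart (mx (tower X j)) t)
     = phi z r j ^+ d *
       \det (z%:M - (2 * r) *: Hpart X t
               - (r ^+ 2 * (phi z r j.-1 / phi z r j)) *: D))
  /\
  (forall (t : R) (r u : R[i]), r != 0 -> chebU u j != 0 ->
     \det ((2 * r * u)%:M - (2 * r) *: Hpart (mx (tower X j)) t)
     = (2 * r) ^+ n * r ^+ (j * d) * chebU u j ^+ d *
       \det (u%:M - Hpart X t - tau u j *: D)).
Proof.
move=> cX D d j j1.
have P1 : forall (t : R) (z r : R[i]), phi z r j != 0 ->
     \det (z%:M - (2 * r) *: Hpart (mx (tower X j)) t)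
     = phi z r j ^+ d *
       \det (z%:M - (2 * r) *: Hpart X t
               - (r ^+ 2 * (phi z r j.-1 / phi z r j)) *: D).
  move=> t z r nz.
  have abr : (r * expi (- t)) * (r * expi t) = r ^+ 2.
    by rewrite mulrACA expiNK mulr1 expr2.
  have H := @eval_identity R n X _ _ r z abr cX j.
  rewrite !HpartE.
  case: j j1 H nz => // j _ H nz.
  change (phi z r j.+1.-1) with (phipair z r j.+1).1.
  rewrite /phi in nz *.
  apply: (mulIf (expf_neq0 n nz)); rewrite H.
  rewrite -[RHS]mulrA; congr (_ * _); rewrite [RHS]mulrC -detZ; congr (\det _).
  rewrite [RHS]scalerBr scalerA; congr (_ - _ *: _); field.
  exact: nz.
split; first exact: P1.
clearbody d D.
move=> t r u rnz Unz.
case: j j1 P1 Unz => // j _ P1 Unz.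
have [c1 c2] := @phipair_cheb R r u j.+1.
have nz : phi (2 * r * u) r j.+1 != 0.
  by rewrite /phi c1 mulf_neq0 ?expf_neq0.
rewrite (P1 t _ _ nz).
change (phi (2 * r * u) r j.+1.-1) with (phipair (2 * r * u) r j.+1).1.
rewrite /phi c1.
have ec : r ^+ 2 * ((phipair (2 * r * u) r j.+1).1 / (r ^+ j.+1 * (Upair u j.+1).2))
          = (2 * r) * tau u j.+1.
  transitivity (r * (r * (phipair (2 * r * u) r j.+1).1) / (r ^+ j.+1 * (Upair u j.+1).2)).
    by rewrite expr2 !mulrA.
  rewrite c2 /tau.
  change (chebU u j.+1.-1) with (Upair u j.+1).1.
  rewrite /chebU in Unz *.
  field.
  by rewrite Unz expf_neq0 ?pnatr_eq0.
rewrite ec.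
have em : (2 * r * u)%:M - (2 * r) *: Hpart X t - ((2 * r) * tau u j.+1) *: D
        = (2 * r) *: (u%:M - Hpart X t - tau u j.+1 *: D).
  by rewrite !scalerBr scale_scalar_mx; congr (_ - _); rewrite scalerA.
rewrite em detZ exprMn -exprM.
rewrite /chebU mulrA; congr (_ * _).
by rewrite mulrC mulrA.
Qed.
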